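(* Let $M$ be a finitely generated monoid which is quasi-isometric to a finitely generated group. Then $M$ is a group.
   Context: For a monoid $S$ generated by a finite set $A$, $d_A(x,y)=\inf\{|w|:w\in A^*,\ xw=y\}$ ($A^*$ the free monoid on $A$, $\inf\emptyset=\infty$). A map $f:(S,d_A)\to(T,d_B)$ is a quasi-isometry if there are $1\le\lambda<\infty$, $0<\epsilon<\infty$, $0\le\mu<\infty$ with $\frac1\lambda d_A(x,y)-\epsilon\le d_B(f(x),f(y))\le\lambda d_A(x,y)+\epsilon$ for all $x,y$, and for each $t\in T$ some $x\in S$ with $\max(d_B(t,f(x)),d_B(f(x),t))\le\mu$. Finitely generated monoids (groups being regarded as monoids) $S,T$ are quasi-isometric if $(S,d_A)$, $(T,d_B)$ are quasi-isometric for some finite (monoid) generating sets $A,B$. *)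

(* Defs.v *)
From HB Require Import structures.
From mathcomp Require Import all_boot all_order all_algebra.
From mathcomp Require Import all_classical all_reals ereal.
From Stdlib Require Import List.
Set Implicit Arguments. Unset Strict Implicit. Unset Printing Implicit Defensive.
Import Order.TTheory GRing.Theory Num.Theory.
Local Open Scope classical_set_scope.
Local Open Scope ereal_scope.

Record Mnd := {
  carrier :> Type;
  mmul : carrier -> carrier -> carrier;
  mone : carrier;
  mmulA : forall x y z, mmul x (mmul y z) = mmul (mmul x y) z;
  mmul1x : forall x, mmul mone x = x;
  mmulx1 : forall x, mmul x mone = x }.

Definition weval (S : Mnd) (w : list S) : S := List.fold_right (@mmul S) (@mone S) w.

Definition word_over (S : Mnd) (A : list S) (w : list S) : Prop :=
  List.Forall (fun a => List.In a A) w.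

Definition mgenerates (S : Mnd) (A : list S) : Prop :=
  forall x : S, exists w, word_over A w /\ weval w = x.

Definition is_group (S : Mnd) : Prop :=
  forall x : S, exists y : S, mmul x y = mone S /\ mmul y x = mone S.

(* d_A(x,y) = inf { |w| : w word over A, x w = y }, with inf of the empty set = +oo. *)
Definition mdist (R : realType) (S : Mnd) (A : list S) (x y : S) : \bar R :=
  ereal_inf [set ((size w)%:R)%:E | w in [set w : list S | word_over A w /\ mmul x (weval w) = y]].

Definition quasi_isometry (R : realType) (S T : Mnd) (A : list S) (B : list T)
    (f : S -> T) : Prop :=
  exists (lam eps mu : R), (1 <= lam)%R /\ (0 < eps)%R /\ (0 <= mu)%R /\
    (forall x y : S,
        (lam^-1)%:E * mdist R A x y - eps%:E <= mdist R B (f x) (f y) /\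
        mdist R B (f x) (f y) <= lam%:E * mdist R A x y + eps%:E) /\
    (forall t : T, exists x : S,
        maxe (mdist R B t (f x)) (mdist R B (f x) t) <= mu%:E).

Definition quasi_isometric (R : realType) (S T : Mnd) : Prop :=
  exists (A : list S) (B : list T) (f : S -> T),
    mgenerates A /\ mgenerates B /\ quasi_isometry R A B f.

Definition fin_generated (S : Mnd) : Prop := exists A : list S, mgenerates A.

(* Main.v *)
Require Import Defs.
From mathcomp Require Import all_boot all_order all_algebra.
From mathcomp Require Import all_classical all_reals.
From mathcomp Require Import ereal.
From Stdlib Require Import List.
Import Order.TTheory GRing.Theory Num.Theory.
Local Open Scope classical_set_scope.
Local Open Scope ereal_scope.

Lemma mdist_group_fin (R : realType) (G : Mnd) (B : list G) (s t : G) :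
  is_group G -> mgenerates B -> @Defs.mdist R _ B s t != +oo.
Proof.
move=> hG hB; have [s' [h1 h2]] := hG s.
have [w [hw ew]] := hB (mmul s' t).
have : @Defs.mdist R _ B s t <= ((size w)%:R)%:E.
  apply: ereal_inf_lbound; exists w => //; split => //.
  by rewrite ew mmulA h1 mmul1x.
by case: (@Defs.mdist R _ B s t).
Qed.

Lemma mdist_empty (R : realType) (M : Mnd) (A : list M) (x y : M) :
  (forall w, word_over A w -> mmul x (weval w) <> y) -> @Defs.mdist R _ A x y = +oo.
Proof.
move=> h; rewrite /Defs.mdist.
have -> : [set (((size w)%:R : R)%:E) | w in [set w : list M | word_over A w /\ mmul x (weval w) = y]] = classical_sets.set0.
  apply: funext => z; apply: propext; split => // -[w [hw e] _]; exact: (h w hw e).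
exact: ereal_inf0.
Qed.

Theorem proposition8p1 (R : realType) (M G : Mnd) :
  fin_generated M -> fin_generated G -> is_group G ->
  quasi_isometric R M G -> is_group M.
Proof.
move=> _ _ hG [A [B [f [hA [hB [lam [eps [mu [l1 [e0 [m0 [hd _]]]]]]]]]]]].
have rinv : forall x : M, exists y, mmul x y = mone M.
  move=> x; have [//|hn] := pselect (exists y, mmul x y = mone M); exfalso.
  have e : @Defs.mdist R _ A x (mone M) = +oo.
    apply: mdist_empty => w _ ew; apply: hn; by exists (weval w).
  have [h _] := hd x (mone M).
  move: h; rewrite e.
  have lp : (0 < lam^-1)%R by rewrite invr_gt0; apply: lt_le_trans l1.
  rewrite gt0_muley ?lte_fin // leye_eq.
  move/eqP => hh; move: (@mdist_group_fin R _ _ (f x) (f (mone M)) hG hB); by rewrite hh.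
move=> x; have [y hy] := rinv x; have [z hz] := rinv y.
have xz : x = z by rewrite -[x]mmulx1 -hz mmulA hy mmul1x.
by exists y; split => //; rewrite -xz in hz.
Qed.
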